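(* Let $\mathfrak{g}$ be a finite-dimensional complex Lie algebra which is not perfect (i.e. $[\mathfrak{g},\mathfrak{g}]\neq\mathfrak{g}$) and has non-trivial center. Then $\mathfrak{g}$ admits a non-trivial CPA-product.
   Context: A CPA-structure (CPA-product) on a Lie algebra $\mathfrak{g}$ is a bilinear product $x\cdot y$ on $\mathfrak{g}$ satisfying, for all $x,y,z$: $x\cdot y=y\cdot x$; $[x,y]\cdot z=x\cdot(y\cdot z)-y\cdot(x\cdot z)$; $x\cdot[y,z]=[x\cdot y,z]+[y,x\cdot z]$. It is non-trivial if $x\cdot y\neq0$ for some $x,y$. *)

(* Defs.v *)
From HB Require Import structures.
From mathcomp Require Import all_boot all_order all_algebra.
From mathcomp Require Import reals complex.
Set Implicit Arguments. Unset Strict Implicit. Unset Printing Implicit Defensive.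
Import Order.TTheory GRing.Theory Num.Theory.
Local Open Scope ring_scope.

Section LieDefs.
Variables (F : fieldType) (V : vectType F).

Definition bilinear_map (m : V -> V -> V) : Prop :=
  (forall (a : F) (x y z : V), m (a *: x + y) z = a *: m x z + m y z) /\
  (forall (a : F) (x y z : V), m x (a *: y + z) = a *: m x y + m x z).

Definition lie_bracket (br : V -> V -> V) : Prop :=
  [/\ bilinear_map br,
      (forall x : V, br x x = 0) &
      (forall x y z : V, br x (br y z) + br y (br z x) + br z (br x y) = 0)].

Definition in_derived (br : V -> V -> V) (x : V) : Prop :=
  exists (n : nat) (c : 'I_n -> F) (a b : 'I_n -> V),
    x = \sum_(i < n) c i *: br (a i) (b i).

Definition perfect (br : V -> V -> V) : Prop := forall x : V, in_derived br x.

Definition nontrivial_center (br : V -> V -> V) : Prop :=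
  exists z : V, z != 0 /\ forall x : V, br z x = 0.

Definition CPA_structure (br : V -> V -> V) (m : V -> V -> V) : Prop :=
  [/\ bilinear_map m,
      (forall x y : V, m x y = m y x),
      (forall x y z : V, m (br x y) z = m x (m y z) - m y (m x z)) &
      (forall x y z : V, m x (br y z) = br (m x y) z + br y (m x z))].

Definition CPA_nontrivial (m : V -> V -> V) : Prop :=
  exists x y : V, m x y != 0.

End LieDefs.

(* Main.v *)
Require Import Defs.
From HB Require Import structures.
From mathcomp Require Import all_boot all_order all_algebra.
From mathcomp Require Import reals complex.
From Stdlib Require Import Classical.
Import GRing.Theory Num.Theory.
Local Open Scope ring_scope.
Local Open Scope complex_scope.

Section Aux.
Variables (K : fieldType) (V : vectType K) (br : V -> V -> V).
Hypothesis Hb : bilinear_map br.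
Hypothesis Ha : forall x : V, br x x = 0.

Lemma br0l z : br 0 z = 0.
Proof.
have := (Hb.1 1 0 0 z); rewrite !scale1r addr0 => H.
by apply: (addrI (br 0 z)); rewrite addr0 -H.
Qed.
Lemma br0r z : br z 0 = 0.
Proof.
have := (Hb.2 1 z 0 0); rewrite !scale1r addr0 => H.
by apply: (addrI (br z 0)); rewrite addr0 -H.
Qed.
Lemma brDl x y z : br (x + y) z = br x z + br y z.
Proof. by have := Hb.1 1 x y z; rewrite !scale1r. Qed.
Lemma brDr x y z : br z (x + y) = br z x + br z y.
Proof. by have := Hb.2 1 z x y; rewrite !scale1r. Qed.
Lemma brZl a x z : br (a *: x) z = a *: br x z.
Proof. by have := Hb.1 a x 0 z; rewrite addr0 br0l addr0. Qed.
Lemma brZr a x z : br z (a *: x) = a *: br z x.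
Proof. by have := Hb.2 a z x 0; rewrite addr0 br0r addr0. Qed.
Lemma br_anti x y : br x y = - br y x.
Proof.
have := Ha (x + y); rewrite brDl !brDr !Ha add0r addr0 => /eqP.
by rewrite addr_eq0 => /eqP.
Qed.
Lemma br_suml n (f : 'I_n -> V) z : br (\sum_i f i) z = \sum_i br (f i) z.
Proof. exact: (big_morph (fun x => br x z) (fun x y => brDl x y z) (br0l z)). Qed.
Lemma br_sumr n (f : 'I_n -> V) z : br z (\sum_i f i) = \sum_i br z (f i).
Proof. exact: (big_morph (fun x => br z x) (fun x y => brDr x y z) (br0r z)). Qed.
End Aux.

Theorem proposition3p8 (R : realType) (V : vectType R[i]) (br : V -> V -> V) :
  lie_bracket br -> ~ perfect br -> nontrivial_center br ->
  exists m : V -> V -> V, CPA_structure br m /\ CPA_nontrivial m.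
Proof.
case=> Hb Ha Hj Hnp [z [z0 Hz]].
set e := vbasis (fullv : {vspace V}).
set P := [seq (x, y) | x <- (e : seq V), y <- (e : seq V)].
set S := [seq br p.1 p.2 | p <- P].
set D := (<<S>>)%VS.
have brD : forall x y, br x y \in D.
  move=> x y.
  rewrite (coord_vbasis (memvf x)) (coord_vbasis (memvf y)).
  rewrite br_suml //; apply: memv_suml => i _.
  rewrite brZl // br_sumr //; apply: memvZ; apply: memv_suml => j _.
  rewrite brZr //; apply: memvZ; apply: memv_span.
  apply/mapP; exists ((vbasis fullv)`_i, (vbasis fullv)`_j) => //.
  by apply: allpairs_f; apply: mem_nth; rewrite size_tuple.
have Dder : forall v, v \in D -> in_derived br v.
  move=> v Hv; rewrite (@coord_span _ _ _ (in_tuple S) v Hv).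
  exists (size S), (coord (in_tuple S) ^~ v),
    (fun k => (nth (0,0) P k).1), (fun k => (nth (0,0) P k).2).
  apply: eq_bigr => k _; congr (_ *: _).
  have hk : (k < size P)%N by rewrite -(size_map (fun p : V * V => br p.1 p.2)).
  by rewrite (nth_map (0,0)).
have [x0 Hx0] : exists x0, ~ in_derived br x0.
  exact: not_all_ex_not.
have x0D : x0 \notin D by apply/negP => /Dder.
set f := fun v => v - projv D v.
have fx0 : f x0 != 0.
  rewrite /f subr_eq0; apply: contra x0D => /eqP ->; exact: memv_proj.
have [i Hi] : exists i, coord e i (f x0) != 0.
  apply: NNPP => H; move: fx0; rewrite (coord_vbasis (memvf (f x0))).
  rewrite big1 ?eqxx // => i _.
  case: (eqVneq (coord e i (f x0)) 0) => [->|Hne]; first by rewrite scale0r.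
  by case: H; exists i.
set phi := fun v => coord e i (f v).
have phiL : forall a x y, phi (a *: x + y) = a * phi x + phi y.
  move=> a x y; rewrite /phi /f.
  rewrite [projv D (_ + _)]linearP /=.
  have -> : a *: x + y - (a *: projv D x + projv D y) = a *: (x - projv D x) + (y - projv D y).
    by rewrite scalerBr addrACA opprD.
  by rewrite [coord e i _]linearP.
have phi0 : phi 0 = 0.
  have := phiL 1 0 0; rewrite scale1r addr0 mul1r => H.
  by apply: (addrI (phi 0)); rewrite addr0 -H.
have phiZ : forall c v, phi (c *: v) = c * phi v.
  by move=> c v; have := phiL c v 0; rewrite addr0 phi0 addr0.
have phibr : forall x y, phi (br x y) = 0.
  by move=> x y; rewrite /phi /f projv_id ?subrr ?linear0.
exists (fun x y => (phi x * phi y) *: z); split; first split.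
  - rewrite /bilinear_map; split=> a x y w; first by rewrite phiL mulrDl scalerDl scalerA mulrA.
    by rewrite phiL mulrDr scalerDl scalerA mulrCA.
  - by move=> x y; rewrite mulrC.
  - move=> x y w; rewrite phibr mul0r scale0r !phiZ.
    by rewrite !mulrA (mulrC (phi x)) subrr.
  - move=> x y w; rewrite phibr mulr0 scale0r brZl // brZr // Hz.
    by rewrite (@br_anti _ _ br Hb Ha) Hz oppr0 !scaler0 addr0.
exists x0, x0; rewrite scaler_eq0 negb_or z0 andbT mulf_neq0 //.
Qed.
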